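(* Let $\mathbf{u}=(u_1,u_2),\mathbf{v}=(v_1,v_2)\in\mathbb{R}^2$ be fixed linearly independent unit vectors, and let $D_1\subset\mathbb{R}^2$ be an open disc centered at the origin. Let $\mathbf{f}=(f_1,f_2)$ be a vector field on $\mathbb{R}^2$ with $f_1,f_2\in C^2_c(D_1)$. Then $$\operatorname{curl}\mathbf{f}=\frac{1}{\det(\mathbf{v},\mathbf{u})}\,D_{\mathbf{u}}D_{\mathbf{v}}\,\mathcal{L}\mathbf{f},$$ where $\det(\mathbf{v},\mathbf{u})=v_1u_2-u_1v_2$. In particular, the operator $\mathcal{L}$ is injective (invertible) on compactly supported (in $D_1$, with $C^2$ components) divergence-free vector fields.
   Context: For a function $h$ on $\mathbb{R}^2$ and a unit vector $\mathbf{u}$, $\mathcal{X}_{\mathbf{u}}h(\mathbf{x})=\int_0^\infty h(\mathbf{x}+t\mathbf{u})\,dt$ and $D_{\mathbf{u}}h=\mathbf{u}\cdot\nabla h$ is the directional derivative. The longitudinal V-line transform is $\mathcal{L}\mathbf{f}=-\mathcal{X}_{\mathbf{u}}(\mathbf{f}\cdot\mathbf{u})+\mathcal{X}_{\mathbf{v}}(\mathbf{f}\cdot\mathbf{v})$, a function on $\mathbb{R}^2$. In 2D, $\operatorname{curl}\mathbf{f}=\frac{\partial f_2}{\partial x_1}-\frac{\partial f_1}{\partial x_2}$. *)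

(* Defs.v *)
From Stdlib Require Import Reals.
From Coquelicot Require Import Coquelicot.
Open Scope R_scope.

Definition ray (x u : R * R) (t : R) : R * R :=
  (fst x + t * fst u, snd x + t * snd u).

Definition Xray (u : R * R) (h : R * R -> R) (x : R * R) : R :=
  RInt_gen (fun t => h (ray x u t)) (at_point 0) (Rbar_locally p_infty).

Definition Ddir (u : R * R) (h : R * R -> R) (x : R * R) : R :=
  Derive (fun t => h (ray x u t)) 0.

Definition d1 (h : R * R -> R) (x : R * R) : R := Derive (fun t => h (t, snd x)) (fst x).
Definition d2 (h : R * R -> R) (x : R * R) : R := Derive (fun t => h (fst x, t)) (snd x).

Definition dot (a b : R * R) : R := fst a * fst b + snd a * snd b.

Definition Lvl (u v : R * R) (f : R * R -> R * R) (x : R * R) : R :=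
  - Xray u (fun y => dot (f y) u) x + Xray v (fun y => dot (f y) v) x.

Definition curl (f : R * R -> R * R) (x : R * R) : R :=
  d1 (fun y => snd (f y)) x - d2 (fun y => fst (f y)) x.

Definition div (f : R * R -> R * R) (x : R * R) : R :=
  d1 (fun y => fst (f y)) x + d2 (fun y => snd (f y)) x.

Definition detvu (v u : R * R) : R := fst v * snd u - fst u * snd v.

Definition unit_vec (u : R * R) : Prop := fst u ^ 2 + snd u ^ 2 = 1.

Definition C2 (h : R * R -> R) : Prop :=
  (forall x, ex_derive (fun t => h (t, snd x)) (fst x)) /\
  (forall x, ex_derive (fun t => h (fst x, t)) (snd x)) /\
  (forall x, ex_derive (fun t => d1 h (t, snd x)) (fst x)) /\
  (forall x, ex_derive (fun t => d1 h (fst x, t)) (snd x)) /\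
  (forall x, ex_derive (fun t => d2 h (t, snd x)) (fst x)) /\
  (forall x, ex_derive (fun t => d2 h (fst x, t)) (snd x)) /\
  (forall x, continuous h x) /\
  (forall x, continuous (d1 h) x) /\
  (forall x, continuous (d2 h) x) /\
  (forall x, continuous (d1 (d1 h)) x) /\
  (forall x, continuous (d2 (d1 h)) x) /\
  (forall x, continuous (d1 (d2 h)) x) /\
  (forall x, continuous (d2 (d2 h)) x).

(* h has compact support contained in the open disc of radius Rad centered
   at the origin: it vanishes outside some closed disc of radius r < Rad. *)
Definition supp_in_disc (Rad : R) (h : R * R -> R) : Prop :=
  exists r, 0 < r < Rad /\
    forall x, r ^ 2 < fst x ^ 2 + snd x ^ 2 -> h x = 0.

Definition C2c_disc (Rad : R) (h : R * R -> R) : Prop :=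
  C2 h /\ supp_in_disc Rad h.

Definition field_C2c_disc (Rad : R) (f : R * R -> R * R) : Prop :=
  C2c_disc Rad (fun y => fst (f y)) /\ C2c_disc Rad (fun y => snd (f y)).

(* Main.v *)
Require Import Defs.
From Stdlib Require Import Reals Lra Psatz FunctionalExtensionality.
From Coquelicot Require Import Coquelicot.
Require Import Defs.
Open Scope R_scope.

Lemma xray_cut (phi : R -> R) (a M : R) :
  (forall s, continuous phi s) -> (forall s, M <= s -> phi s = 0) ->
  RInt_gen (fun s => phi (a + s)) (at_point 0) (Rbar_locally p_infty) = RInt phi a M.
Proof.
  intros Hc H0.
  apply is_RInt_gen_unique.
  unfold is_RInt_gen, filterlimi, filter_le, filtermapi.
  intros P HP.
  exists (fun x => x = 0) (fun b => Rmax 0 (M - a) < b).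
  - reflexivity.
  - exists (Rmax 0 (M - a)). auto.
  - intros x y -> Hy. exists (RInt phi a M). split; [| now apply locally_singleton].
    assert (Hy1 : 0 < y) by (generalize (Rmax_l 0 (M-a)); lra).
    assert (Hy2 : M < a + y) by (generalize (Rmax_r 0 (M-a)); lra).
    assert (Hex : forall c d, ex_RInt phi c d) by (intros; apply (ex_RInt_continuous (V:=R_CompleteNormedModule)); auto).
    replace (RInt phi a M) with (RInt (fun s => phi (a + s)) 0 y).
    + apply RInt_correct. apply (ex_RInt_continuous (V:=R_CompleteNormedModule)). intros z _.
      apply continuous_comp with (g := phi); auto.
      apply (@continuous_plus R_UniformSpace R_AbsRing R_NormedModule (fun _ => a) (fun s => s)). apply continuous_const. apply continuous_id.
    + transitivity (RInt phi (1 * 0 + a) (1 * y + a)).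
      * rewrite <- RInt_comp_lin. apply RInt_ext. intros z _.
        unfold scal; simpl; unfold mult; simpl. rewrite Rmult_1_l. f_equal; ring. apply Hex.
      * replace (1*0+a) with a by ring. replace (1*y+a) with (a+y) by ring.
        rewrite <- (RInt_Chasles phi a M (a+y)) by auto.
        rewrite (RInt_ext phi (fun _ => 0) M (a+y)).
        rewrite RInt_const. unfold scal, plus, zero; simpl; unfold mult, plus; simpl. ring.
        intros z Hz. apply H0. rewrite Rmin_left in Hz by lra. lra.
Qed.


Definition box (r : R) (h : R * R -> R) : Prop :=
  forall q, r ^ 2 < fst q ^ 2 \/ r ^ 2 < snd q ^ 2 -> h q = 0.

Lemma cont_aff (c d s : R) : continuous (fun t => c + t * d) s.
Proof. apply (ex_derive_continuous (K:=R_AbsRing) (V:=R_NormedModule)). auto_derive. auto. Qed.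

Lemma cont_pair (h : R * R -> R) (q : R * R) :
  continuous h q -> continuous (fun z : R * R => h (fst z, snd z)) (fst q, snd q).
Proof.
  intros H. replace (fun z : R * R => h (fst z, snd z)) with h.
  now rewrite <- surjective_pairing.
  apply functional_extensionality; intros z; now rewrite <- surjective_pairing.
Qed.

Lemma cont_ray_comp (h : R * R -> R) p w s :
  (forall q, continuous h q) -> continuous (fun t => h (ray p w t)) s.
Proof.
  intros Hc. unfold ray.
  apply (continuous_comp_2 (fun t => fst p + t * fst w) (fun t => snd p + t * snd w)
           (fun a b => h (a, b))).
  apply cont_aff. apply cont_aff.
  apply (cont_pair h (fst p + s * fst w, snd p + s * snd w)). apply Hc.
Qed.

Lemma ray_out (w : R * R) (r : R) (p : R * R) (s : R) :
  unit_vec w -> 0 <= r ->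
  2 * (r + Rabs (fst p) + Rabs (snd p)) + 1 <= s ->
  r ^ 2 < fst (ray p w s) ^ 2 \/ r ^ 2 < snd (ray p w s) ^ 2.
Proof.
  unfold unit_vec, ray; simpl. intros Hw Hr Hs.
  destruct w as [w1 w2]; destruct p as [p1 p2]; simpl in *.
  assert (A1 := Rabs_pos p1). assert (A2 := Rabs_pos p2).
  assert (K : forall p z A, Rabs p = A -> z ^ 2 >= 1/2 -> 2*(r+A)+1 <= s ->
            r ^ 2 < (p + s * z) ^ 2).
  { intros p z A HA Hz Hs'.
    assert (HA0 : 0 <= A) by (rewrite <- HA; apply Rabs_pos).
    assert (Hpa : -A <= p <= A) by (rewrite <- HA; unfold Rabs; destruct (Rcase_abs p); lra).
    destruct (Rlt_or_le (r ^ 2) ((p + s * z) ^ 2)) as [?|Hn]; auto. exfalso.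
    assert (Hb : -r <= p + s * z <= r) by (split; nra).
    assert (Hsz : (s * z) ^ 2 <= (r + A) ^ 2) by nra.
    assert (Hs2 : (s * z) ^ 2 >= s ^ 2 / 2) by (rewrite Rpow_mult_distr; nra).
    nra. }
  destruct (Rle_or_lt (1/2) (w1 ^ 2)).
  - left. apply (K p1 w1 (Rabs p1)); auto; lra.
  - right. apply (K p2 w2 (Rabs p2)); auto; lra.
Qed.


Definition Mx (r : R) (p : R * R) := 2 * (r + Rabs (fst p) + Rabs (snd p)) + 1.

Lemma Xray_shift w H r p a M : unit_vec w -> 0 <= r -> box r H -> (forall q, continuous H q) ->
  Mx r p <= M ->
  Xray w H (ray p w a) = RInt (fun s => H (ray p w s)) a M.
Proof.
  intros Hw Hr Hb Hc HM. unfold Xray.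
  rewrite <- (xray_cut (fun s => H (ray p w s)) a M).
  - f_equal. apply functional_extensionality; intros t. f_equal. unfold ray; simpl. f_equal; ring.
  - intros s. apply cont_ray_comp; auto.
  - intros s Hs. apply Hb. apply ray_out; auto. unfold Mx in HM. lra.
Qed.

Lemma ray0 p w : ray p w 0 = p.
Proof. unfold ray. destruct p; simpl; f_equal; ring. Qed.

Lemma Xray_at w H r p M : unit_vec w -> 0 <= r -> box r H -> (forall q, continuous H q) ->
  Mx r p <= M ->
  Xray w H p = RInt (fun s => H (ray p w s)) 0 M.
Proof.
  intros. rewrite <- (Xray_shift w H r p 0 M); auto. now rewrite ray0.
Qed.

Definition CC1 (h : R * R -> R) : Prop :=
  (forall x, ex_derive (fun t => h (t, snd x)) (fst x)) /\
  (forall x, ex_derive (fun t => h (fst x, t)) (snd x)) /\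
  (forall x, continuous (d1 h) x) /\
  (forall x, continuous (d2 h) x).

Lemma C2_C1 h : C2 h -> CC1 h.
Proof. unfold C2, CC1. tauto. Qed.

Lemma dir_deriv (h : R * R -> R) p w t0 : CC1 h ->
  is_derive (fun t => h (ray p w t)) t0
    (fst w * d1 h (ray p w t0) + snd w * d2 h (ray p w t0)).
Proof.
  intros (H1 & H2 & H3 & H4).
  set (X := fst p + t0 * fst w). set (Y := snd p + t0 * snd w).
  assert (Hd : differentiable_pt_lim (fun a b => h (a, b)) X Y (d1 h (X, Y)) (d2 h (X, Y))).
  { apply filterdiff_differentiable_pt_lim.
    assert (HF := is_derive_filterdiff (fun a b => h (a, b)) X Y (fun a b => d1 h (a, b)) (d2 h (X, Y))).
    apply HF.
    - apply filter_forall. intros u. apply Derive_correct. apply (H1 u).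
    - apply Derive_correct. apply (H2 (X, Y)).
    - apply (cont_pair (d1 h) (X, Y)). apply H3. }
  assert (Hc := derivable_pt_lim_comp_2d (fun a b => h (a, b)) (fun t => fst p + t * fst w)
           (fun t => snd p + t * snd w) t0 _ _ (fst w) (snd w) Hd).
  apply is_derive_Reals in Hc.
  - unfold ray. replace (fst w * d1 h (fst p + t0 * fst w, snd p + t0 * snd w) +
      snd w * d2 h (fst p + t0 * fst w, snd p + t0 * snd w)) with
      (d1 h (X, Y) * fst w + d2 h (X, Y) * snd w) by (unfold X, Y; ring).
    exact Hc.
  - apply is_derive_Reals. auto_derive; auto; ring.
  - apply is_derive_Reals. auto_derive; auto; ring.
Qed.


Lemma sq_lt_abs r z : 0 <= r -> r ^ 2 < z ^ 2 -> r < Rabs z.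
Proof. intros. unfold Rabs; destruct (Rcase_abs z); nra. Qed.

Lemma near_out r z : 0 <= r -> r ^ 2 < z ^ 2 ->
  locally z (fun t => r ^ 2 < t ^ 2).
Proof.
  intros Hr Hz. assert (Hp : 0 < Rabs z - r) by (generalize (sq_lt_abs r z Hr Hz); lra).
  exists (mkposreal _ Hp). intros t Ht.
  assert (Ht' : Rabs (t - z) < Rabs z - r) by exact Ht.
  revert Ht'. unfold Rabs; destruct (Rcase_abs (t - z)); destruct (Rcase_abs z); intros; nra.
Qed.

Lemma box_d1 r h : 0 <= r -> box r h -> box r (d1 h).
Proof.
  intros Hr Hb q Hq. unfold d1.
  destruct Hq as [Hq | Hq].
  - rewrite (Derive_ext_loc _ (fun _ => 0)). apply Derive_const.
    generalize (near_out r (fst q) Hr Hq). apply filter_imp. intros t Ht.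
    apply Hb. simpl. auto.
  - rewrite (Derive_ext _ (fun _ => 0)). apply Derive_const.
    intros t. apply Hb. simpl. auto.
Qed.

Lemma box_d2 r h : 0 <= r -> box r h -> box r (d2 h).
Proof.
  intros Hr Hb q Hq. unfold d2.
  destruct Hq as [Hq | Hq].
  - rewrite (Derive_ext _ (fun _ => 0)). apply Derive_const.
    intros t. apply Hb. simpl. auto.
  - rewrite (Derive_ext_loc _ (fun _ => 0)). apply Derive_const.
    generalize (near_out r (snd q) Hr Hq). apply filter_imp. intros t Ht.
    apply Hb. simpl. auto.
Qed.

Lemma box_lin r a b h k : box r h -> box r k -> box r (fun y => a * h y + b * k y).
Proof. intros H1 H2 q Hq. rewrite H1, H2; auto; ring. Qed.

Lemma box_mono r r' h : 0 <= r -> r <= r' -> box r h -> box r' h.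
Proof.
  intros H0 H1 Hb q Hq. apply Hb.
  assert (r ^ 2 <= r' ^ 2) by nra. lra.
Qed.

Lemma disc_box Rad h : supp_in_disc Rad h -> exists r, 0 < r /\ box r h.
Proof.
  intros (r & Hr & Hh). exists r. split. lra.
  intros q Hq. apply Hh. assert (0 <= fst q ^ 2) by nra. assert (0 <= snd q ^ 2) by nra. lra.
Qed.

Lemma cont_lin (a b : R) (h k : R * R -> R) x :
  continuous h x -> continuous k x -> continuous (fun y => a * h y + b * k y) x.
Proof.
  intros H1 H2.
  apply (@continuous_plus _ R_AbsRing R_NormedModule (fun y => a * h y) (fun y => b * k y)).
  - apply (@continuous_mult _ R_AbsRing (fun _ => a) h). apply continuous_const. auto.
  - apply (@continuous_mult _ R_AbsRing (fun _ => b) k). apply continuous_const. auto.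
Qed.


Lemma is_der_lin (a b : R) (f1 f2 : R -> R) z l1 l2 :
  is_derive f1 z l1 -> is_derive f2 z l2 -> is_derive (fun t => a * f1 t + b * f2 t) z (a * l1 + b * l2).
Proof.
  intros H1 H2.
  apply (is_derive_plus (fun t => a * f1 t) (fun t => b * f2 t)).
  apply (is_derive_scal f1). auto. apply (is_derive_scal f2). auto.
Qed.

Lemma ex_lin (a b : R) (f1 f2 : R -> R) z :
  ex_derive f1 z -> ex_derive f2 z -> ex_derive (fun t => a * f1 t + b * f2 t) z.
Proof.
  intros [l1 H1] [l2 H2]. exists (a * l1 + b * l2). apply is_der_lin; auto.
Qed.

Lemma der_lin (a b : R) (f1 f2 : R -> R) z :
  ex_derive f1 z -> ex_derive f2 z -> Derive (fun t => a * f1 t + b * f2 t) z = a * Derive f1 z + b * Derive f2 z.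
Proof.
  intros H1 H2. apply is_derive_unique. apply is_der_lin; apply Derive_correct; auto.
Qed.

Lemma d1_lin a b h k : (forall x, ex_derive (fun t => h (t, snd x)) (fst x)) ->
  (forall x, ex_derive (fun t => k (t, snd x)) (fst x)) ->
  d1 (fun y => a * h y + b * k y) = fun y => a * d1 h y + b * d1 k y.
Proof.
  intros H1 H2. apply functional_extensionality; intros y. unfold d1.
  apply der_lin; auto.
Qed.

Lemma d2_lin a b h k : (forall x, ex_derive (fun t => h (fst x, t)) (snd x)) ->
  (forall x, ex_derive (fun t => k (fst x, t)) (snd x)) ->
  d2 (fun y => a * h y + b * k y) = fun y => a * d2 h y + b * d2 k y.
Proof.
  intros H1 H2. apply functional_extensionality; intros y. unfold d2.
  apply der_lin; auto.
Qed.

Lemma C2_lin a b h k : C2 h -> C2 k -> C2 (fun y => a * h y + b * k y).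
Proof.
  intros (h1 & h2 & h3 & h4 & h5 & h6 & h7 & h8 & h9 & h10 & h11 & h12 & h13)
         (k1 & k2 & k3 & k4 & k5 & k6 & k7 & k8 & k9 & k10 & k11 & k12 & k13).
  assert (E1 := d1_lin a b h k h1 k1).
  assert (E2 := d2_lin a b h k h2 k2).
  assert (E11 := d1_lin a b (d1 h) (d1 k) h3 k3).
  assert (E21 := d2_lin a b (d1 h) (d1 k) h4 k4).
  assert (E12 := d1_lin a b (d2 h) (d2 k) h5 k5).
  assert (E22 := d2_lin a b (d2 h) (d2 k) h6 k6).
  unfold C2. rewrite E1, E2, E11, E21, E12, E22.
  repeat split; intros x; first [apply ex_lin | apply cont_lin]; auto.
Qed.

Lemma CC1_lin a b h k : CC1 h -> CC1 k -> CC1 (fun y => a * h y + b * k y).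
Proof.
  intros (h1 & h2 & h3 & h4) (k1 & k2 & k3 & k4).
  unfold CC1. rewrite (d1_lin a b h k h1 k1), (d2_lin a b h k h2 k2).
  repeat split; intros x; first [apply ex_lin | apply cont_lin]; auto.
Qed.


Lemma ex_RInt_cont (phi : R -> R) a b : (forall s, continuous phi s) -> ex_RInt phi a b.
Proof. intros. apply (ex_RInt_continuous (V:=R_CompleteNormedModule)). auto. Qed.

Lemma P1 w H r y : unit_vec w -> 0 <= r -> box r H -> (forall q, continuous H q) ->
  is_derive (fun t => Xray w H (ray y w t)) 0 (- H y).
Proof.
  intros Hw Hr Hb Hc.
  set (M := Mx r y).
  apply (is_derive_ext (fun t => RInt (fun s => H (ray y w s)) t M)).
  { intros t. symmetry. apply (Xray_shift w H r); auto. unfold M; lra. }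
  assert (HH := is_derive_RInt' (fun s => H (ray y w s)) (fun t => RInt (fun s => H (ray y w s)) t M) 0 M).
  replace (- H y) with (opp (H (ray y w 0))) by (rewrite ray0; reflexivity). apply HH.
  - apply filter_forall. intros t. apply (RInt_correct (V:=R_CompleteNormedModule)).
    apply ex_RInt_cont. intros; apply cont_ray_comp; auto.
  - apply cont_ray_comp; auto.
Qed.

Lemma unit_le1 w : unit_vec w -> Rabs (fst w) <= 1 /\ Rabs (snd w) <= 1.
Proof.
  unfold unit_vec. intros H. split; unfold Rabs; destruct Rcase_abs; nra.
Qed.

Lemma cont_aff2 (c d e : R) (q : R * R) : continuous (fun p : R * R => c + fst p * d + snd p * e) q.
Proof.
  apply (@continuous_plus _ R_AbsRing R_NormedModule (fun p : R * R => c + fst p * d) (fun p => snd p * e)).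
  apply (@continuous_plus _ R_AbsRing R_NormedModule (fun p : R * R => c) (fun p => fst p * d)).
  apply continuous_const.
  apply (@continuous_mult _ R_AbsRing (fun p : R * R => fst p) (fun _ => d)). apply continuous_fst. apply continuous_const.
  apply (@continuous_mult _ R_AbsRing (fun p : R * R => snd p) (fun _ => e)). apply continuous_snd. apply continuous_const.
Qed.

Definition Dw (w : R * R) (H : R * R -> R) := fun q => fst w * d1 H q + snd w * d2 H q.

Lemma cont_aff2' (c d e : R) (q : R * R) : continuous (fun p : R * R => c + snd p * d + fst p * e) q.
Proof.
  apply (@continuous_plus _ R_AbsRing R_NormedModule (fun p : R * R => c + snd p * d) (fun p => fst p * e)).
  apply (@continuous_plus _ R_AbsRing R_NormedModule (fun p : R * R => c) (fun p => snd p * d)).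
  apply continuous_const.
  apply (@continuous_mult _ R_AbsRing (fun p : R * R => snd p) (fun _ => d)). apply continuous_snd. apply continuous_const.
  apply (@continuous_mult _ R_AbsRing (fun p : R * R => fst p) (fun _ => e)). apply continuous_fst. apply continuous_const.
Qed.

Lemma cont_comp_pairfun (K : R * R -> R) (a b : R * R -> R) q :
  continuous a q -> continuous b q -> (forall q', continuous K q') -> continuous (fun p => K (a p, b p)) q.
Proof.
  intros Ha Hb HK. apply (continuous_comp_2 a b (fun s t => K (s, t))); auto.
  exact (cont_pair K (a q, b q) (HK _)).
Qed.

Lemma P2 u v H r y : unit_vec u -> unit_vec v -> 0 < r -> box r H -> CC1 H -> (forall q, continuous H q) ->
  is_derive (fun t => Xray u H (ray y v t)) 0 (Xray u (Dw v H) y).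
Proof.
  intros Hu Hv Hr Hb HC Hcont.
  assert (HC' := HC). destruct HC' as (H1 & H2 & H3 & H4).
  set (M := Mx r y + 4).
  assert (HbD : box r (Dw v H)).
  { apply box_lin; [apply box_d1 | apply box_d2]; auto; lra. }
  assert (HcD : forall q, continuous (Dw v H) q).
  { intros q. apply cont_lin; auto. }
  rewrite (Xray_at u (Dw v H) r y M) by (auto; try lra; unfold M; lra).
  set (F := fun t s => H (ray (ray y u s) v t)).
  apply is_derive_ext_loc with (f := fun t => RInt (fun s => F t s) 0 M).
  { assert (Hp : 0 < 1) by lra. exists (mkposreal _ Hp). intros t Ht.
    assert (Ht' : Rabs (t - 0) < 1) by exact Ht. rewrite Rminus_0_r in Ht'.
    symmetry. rewrite (Xray_at u H r (ray y v t) M); auto.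
    - apply RInt_ext. intros s _. unfold F. f_equal. unfold ray; simpl; f_equal; ring.
    - lra.
    - destruct (unit_le1 v Hv) as [V1 V2]. unfold M, Mx, ray; simpl.
      assert (Rabs (fst y + t * fst v) <= Rabs (fst y) + 1).
      { eapply Rle_trans. apply Rabs_triang. rewrite Rabs_mult.
        assert (Rabs t * Rabs (fst v) <= 1 * 1) by (apply Rmult_le_compat; try apply Rabs_pos; lra). lra. }
      assert (Rabs (snd y + t * snd v) <= Rabs (snd y) + 1).
      { eapply Rle_trans. apply Rabs_triang. rewrite Rabs_mult.
        assert (Rabs t * Rabs (snd v) <= 1 * 1) by (apply Rmult_le_compat; try apply Rabs_pos; lra). lra. }
      lra. }
  assert (HD : forall s z, is_derive (fun t => F t s) z (Dw v H (ray (ray y u s) v z))).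
  { intros s z. unfold F, Dw. apply dir_deriv; auto. }
  assert (Eq : forall s z, Derive (fun t => F t s) z = Dw v H (ray (ray y u s) v z)).
  { intros; apply is_derive_unique; auto. }
  replace (RInt (fun s => Dw v H (ray y u s)) 0 M) with (RInt (fun s => Derive (fun t => F t s) 0) 0 M).
  2: { apply RInt_ext; intros s _. rewrite Eq, ray0. reflexivity. }
  apply is_derive_RInt_param.
  - apply filter_forall. intros z s _. eexists; apply HD.
  - intros s _. apply continuity_2d_pt_ext with (f := fun z s => Dw v H (ray (ray y u s) v z)).
    { intros; now rewrite Eq. }
    apply continuity_2d_pt_filterlim.
    change (continuous (fun p : R * R => Dw v H (ray (ray y u (snd p)) v (fst p))) (0, s)).
    apply (continuous_ext (fun p : R * R => Dw v H (fst y + snd p * fst u + fst p * fst v, snd y + snd p * snd u + fst p * snd v))).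
    { intros p. reflexivity. }
    apply cont_comp_pairfun; [apply cont_aff2' | apply cont_aff2' | apply HcD].
  - apply filter_forall. intros z. apply ex_RInt_cont. intros s. unfold F.
    apply (continuous_ext (fun s => H (ray (ray y v z) u s))).
    { intros s0. f_equal. unfold ray; simpl; f_equal; ring. }
    apply cont_ray_comp; auto.
Qed.


Definition gw (f : R * R -> R * R) (w : R * R) := fun y => fst w * fst (f y) + snd w * snd (f y).

Lemma Egw f w : (fun y => dot (f y) w) = gw f w.
Proof. apply functional_extensionality; intros y. unfold dot, gw. ring. Qed.

Lemma field_box Rad f : field_C2c_disc Rad f ->
  exists r, 0 < r /\ box r (fun y => fst (f y)) /\ box r (fun y => snd (f y)).
Proof.
  intros [[_ S1] [_ S2]].
  destruct (disc_box _ _ S1) as (r1 & Hr1 & B1).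
  destruct (disc_box _ _ S2) as (r2 & Hr2 & B2).
  exists (Rmax r1 r2). split. generalize (Rmax_l r1 r2); lra.
  split; eapply box_mono; eauto; try lra; [apply Rmax_l | apply Rmax_r].
Qed.

Lemma part1 u v Rad f x : unit_vec u -> unit_vec v -> detvu v u <> 0 -> field_C2c_disc Rad f ->
  curl f x = / detvu v u * Ddir u (Ddir v (Lvl u v f)) x.
Proof.
  intros Hu Hv Hdet Hf.
  destruct (field_box Rad f Hf) as (r & Hr & B1 & B2).
  destruct Hf as [[C2f1 _] [C2f2 _]].
  assert (Cg : forall w, C2 (gw f w)) by (intros; apply C2_lin; auto).
  assert (Bg : forall w, box r (gw f w)) by (intros; apply box_lin; auto).
  assert (Ccg : forall w q, continuous (gw f w) q) by (intros w; apply (Cg w)).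
  assert (EL : Lvl u v f = fun p => - Xray u (gw f u) p + Xray v (gw f v) p).
  { unfold Lvl. rewrite Egw, Egw. reflexivity. }
  assert (EA : Ddir v (Lvl u v f) = fun y => - Xray u (Dw v (gw f u)) y - gw f v y).
  { apply functional_extensionality; intros y. unfold Ddir. apply is_derive_unique.
    rewrite EL.
    replace (- Xray u (Dw v (gw f u)) y - gw f v y) with
      (- Xray u (Dw v (gw f u)) y + - gw f v y) by ring.
    apply (is_derive_plus (fun t => - Xray u (gw f u) (ray y v t)) (fun t => Xray v (gw f v) (ray y v t))).
    - apply (is_derive_opp (fun t => Xray u (gw f u) (ray y v t))).
      apply (P2 u v (gw f u) r y); auto. apply C2_C1; auto.
    - apply (P1 v (gw f v) r y); auto; lra. }
  assert (EB : Ddir u (Ddir v (Lvl u v f)) x = Dw v (gw f u) x - Dw u (gw f v) x).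
  { unfold Ddir at 1. rewrite EA. apply is_derive_unique.
    replace (Dw v (gw f u) x - Dw u (gw f v) x) with
      (- - Dw v (gw f u) x + - Dw u (gw f v) (ray x u 0)) by (rewrite ray0; ring).
    apply (is_derive_plus (fun t => - Xray u (Dw v (gw f u)) (ray x u t)) (fun t => - gw f v (ray x u t))).
    - apply (is_derive_opp (fun t => Xray u (Dw v (gw f u)) (ray x u t))).
      apply (P1 u (Dw v (gw f u)) r x); try lra; auto.
      + apply box_lin; [apply box_d1 | apply box_d2]; auto; lra.
      + intros q. destruct (C2_C1 _ (Cg u)) as (_ & _ & H3 & H4). apply cont_lin; auto.
    - apply (is_derive_opp (fun t => gw f v (ray x u t))).
      apply dir_deriv. apply C2_C1; auto. }
  rewrite EB. unfold Dw, gw.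
  destruct C2f1 as (a1 & a2 & _). destruct C2f2 as (b1 & b2 & _).
  rewrite (d1_lin _ _ _ _ a1 b1), (d2_lin _ _ _ _ a2 b2).
  rewrite (d1_lin _ _ _ _ a1 b1), (d2_lin _ _ _ _ a2 b2).
  unfold curl. unfold detvu in *. field. auto.
Qed.


Lemma der_cont (F : R -> R) x : ex_derive F x -> continuity_pt F x.
Proof. intros H. apply continuity_pt_filterlim. apply (ex_derive_continuous (K:=R_AbsRing) (V:=R_NormedModule)). auto. Qed.

Lemma ZERO (F F' : R -> R) a b x :
  (forall z, is_derive F z (F' z)) -> (forall z, 0 <= F' z) -> F a = 0 -> F b = 0 ->
  a < x < b -> F' x = 0.
Proof.
  intros HD Hp Ha Hb Hx.
  assert (Hz : forall z, a <= z <= b -> F z = 0).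
  { intros z Hz.
    assert (F z >= 0).
    { destruct (Req_dec z a) as [->|Hn]; [lra|].
      destruct (MVT_gen F a z F') as (c & _ & Hc).
      - intros; apply HD.
      - intros; apply der_cont. eexists; apply HD.
      - generalize (Hp c); nra. }
    assert (F z <= 0).
    { destruct (Req_dec z b) as [->|Hn]; [lra|].
      destruct (MVT_gen F z b F') as (c & _ & Hc).
      - intros; apply HD.
      - intros; apply der_cont. eexists; apply HD.
      - generalize (Hp c); nra. }
    lra. }
  assert (Hpos : 0 < Rmin (x - a) (b - x)) by (apply Rmin_glb_lt; lra).
  assert (H1 : is_derive (fun _ : R => 0) x (F' x)).
  { apply (is_derive_ext_loc F). exists (mkposreal _ Hpos). intros t Ht.
    assert (Ht' : Rabs (t - x) < Rmin (x - a) (b - x)) by exact Ht.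
    generalize (Rmin_l (x - a) (b - x)) (Rmin_r (x - a) (b - x)).
    revert Ht'; unfold Rabs; destruct Rcase_abs; intros; apply Hz; lra.
    apply HD. }
  apply is_derive_unique in H1. rewrite Derive_const in H1. auto.
Qed.

Lemma everywhere_2d (P : R -> R -> Prop) x y : (forall u v, P u v) -> locally_2d P x y.
Proof. intros H. exists (mkposreal 1 Rlt_0_1). intros; auto. Qed.

Lemma c2d (K : R * R -> R) x y : continuous K (x, y) -> continuity_2d_pt (fun u v => K (u, v)) x y.
Proof. intros H. apply continuity_2d_pt_filterlim. exact (cont_pair K (x, y) H). Qed.

Lemma c1d (K : R * R -> R) s t : continuous K (s, t) -> continuous (fun t => K (s, t)) t.
Proof.
  intros H. apply (continuous_comp_2 (fun _ => s) (fun t => t) (fun a b => K (a, b))).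
  apply continuous_const. apply continuous_id. exact (cont_pair K (s, t) H).
Qed.

Lemma c1d' (K : R * R -> R) s t : continuous K (s, t) -> continuous (fun s => K (s, t)) s.
Proof.
  intros H. apply (continuous_comp_2 (fun s => s) (fun _ => t) (fun a b => K (a, b))).
  apply continuous_id. apply continuous_const. exact (cont_pair K (s, t) H).
Qed.

Lemma schwarz_C2 h q : C2 h -> d1 (d2 h) q = d2 (d1 h) q.
Proof.
  intros (h1 & h2 & h3 & h4 & h5 & h6 & h7 & h8 & h9 & h10 & h11 & h12 & h13).
  destruct q as [x y].
  apply (Schwarz (fun a b => h (a, b)) x y).
  - apply everywhere_2d. intros u w. repeat split.
    + apply (h1 (u, w)). + apply (h2 (u, w)). + apply (h5 (u, w)). + apply (h4 (u, w)).
  - apply (c2d (d1 (d2 h))). apply h12.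
  - apply (c2d (d2 (d1 h))). apply h11.
Qed.


Lemma harm_zero (a : R * R -> R) r : C2 a -> 0 < r -> box r a ->
  (forall q, d1 (d1 a) q = - d2 (d2 a) q) -> forall q, a q = 0.
Proof.
  intros HC Hr Hb HL.
  assert (HC' := HC).
  destruct HC' as (h1 & h2 & h3 & h4 & h5 & h6 & h7 & h8 & h9 & h10 & h11 & h12 & h13).
  assert (Hb1 : box r (d1 a)) by (apply box_d1; auto; lra).
  assert (Hb2 : box r (d2 a)) by (apply box_d2; auto; lra).
  set (M := r + 1).
  assert (HM : r ^ 2 < M ^ 2) by (unfold M; nra).
  set (e := fun s t => d1 a (s, t) ^ 2 + d2 a (s, t) ^ 2).
  set (Q := fun s => RInt (fun t => a (s, t) * d1 a (s, t)) (-M) M).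
  set (E := fun s => RInt (fun t => e s t) (-M) M).
  assert (Hce : forall s t, continuous (fun t => e s t) t).
  { intros s t. unfold e.
    apply (@continuous_plus _ R_AbsRing R_NormedModule (fun t => d1 a (s, t) ^ 2) (fun t => d2 a (s, t) ^ 2)).
    - simpl. apply (@continuous_mult _ R_AbsRing (fun t => d1 a (s, t)) (fun t => d1 a (s, t) * 1)).
      apply c1d; auto.
      apply (@continuous_mult _ R_AbsRing (fun t => d1 a (s, t)) (fun t => 1)). apply c1d; auto. apply continuous_const.
    - simpl. apply (@continuous_mult _ R_AbsRing (fun t => d2 a (s, t)) (fun t => d2 a (s, t) * 1)).
      apply c1d; auto.
      apply (@continuous_mult _ R_AbsRing (fun t => d2 a (s, t)) (fun t => 1)). apply c1d; auto. apply continuous_const. }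
  assert (Hex : forall s, ex_RInt (fun t => e s t) (-M) M).
  { intros s. apply ex_RInt_cont. auto. }
  assert (Epos : forall s, 0 <= E s).
  { intros s. unfold E. apply RInt_ge_0. unfold M; lra. auto. intros; unfold e; cbv beta; nra. }
  assert (HQ : forall s, is_derive Q s (E s)).
  { intros s.
    set (f0 := fun z t => a (z, t) * d1 a (z, t)).
    assert (Hf0 : forall z t, Derive (fun z' => f0 z' t) z = d1 a (z, t) * d1 a (z, t) + a (z, t) * d1 (d1 a) (z, t)).
    { intros z t. unfold f0. rewrite Derive_mult. reflexivity. apply (h1 (z, t)). apply (h3 (z, t)). }
    set (w := fun t => a (s, t) * d2 a (s, t)).
    set (w' := fun t => d2 a (s, t) * d2 a (s, t) + a (s, t) * d2 (d2 a) (s, t)).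
    replace (E s) with (RInt (fun t => Derive (fun z => f0 z t) s) (-M) M).
    - apply (is_derive_RInt_param f0 (-M) M s).
      + apply filter_forall. intros z t _. unfold f0. apply ex_derive_mult. apply (h1 (z, t)). apply (h3 (z, t)).
      + intros t _. apply continuity_2d_pt_ext with
          (f := fun u v => d1 a (u, v) * d1 a (u, v) + a (u, v) * d1 (d1 a) (u, v)).
        { intros; now rewrite Hf0. }
        apply continuity_2d_pt_plus; apply continuity_2d_pt_mult; apply c2d; auto.
      + apply filter_forall. intros z. apply ex_RInt_cont. intros t. unfold f0.
        apply (@continuous_mult _ R_AbsRing (fun t => a (z, t)) (fun t => d1 a (z, t))); apply c1d; auto.
    - apply is_RInt_unique.
      apply (is_RInt_ext (fun t => minus (e s t) (w' t))).
      { intros t _. rewrite Hf0. unfold minus, plus, opp; simpl. unfold e, w'. rewrite HL. change (@pair (AbsRing.sort R_AbsRing) R s t) with (@pair R R s t). ring. }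
      replace (E s) with (minus (E s) (minus (w M) (w (-M)))).
      2: { unfold w. rewrite (Hb (s, M)), (Hb (s, -M)).
           unfold minus, plus, opp; simpl. ring. simpl; right; nra. simpl; right; nra. }
      apply (is_RInt_minus (V:=R_NormedModule)).
      + apply (RInt_correct (V:=R_CompleteNormedModule)). auto.
      + apply (is_RInt_derive (V:=R_CompleteNormedModule) w w').
        * intros x _. replace (w' x) with (Derive w x).
          apply Derive_correct. apply ex_derive_mult; [apply (h2 (s, x)) | apply (h6 (s, x))].
          unfold w. rewrite Derive_mult. reflexivity. apply (h2 (s, x)). apply (h6 (s, x)).
        * intros x _. unfold w'.
          apply (@continuous_plus _ R_AbsRing R_NormedModule (fun t => d2 a (s, t) * d2 a (s, t)) (fun t => a (s, t) * d2 (d2 a) (s, t))).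
          apply (@continuous_mult _ R_AbsRing (fun t => d2 a (s, t)) (fun t => d2 a (s, t))); apply c1d; auto.
          apply (@continuous_mult _ R_AbsRing (fun t => a (s, t)) (fun t => d2 (d2 a) (s, t))); apply c1d; auto. }
  assert (Q0 : forall s, r ^ 2 < s ^ 2 -> Q s = 0).
  { intros s Hs. unfold Q. rewrite (RInt_ext _ (fun _ => 0)).
    rewrite RInt_const. apply (scal_zero_r (K:=R_AbsRing) (V:=R_NormedModule)).
    intros t _. cbv beta. rewrite (Hb (s, t)). apply Rmult_0_l. simpl; auto. }
  assert (E0 : forall s, - M < s < M -> E s = 0).
  { intros s Hs. apply (ZERO Q E (-M) M s); auto; apply Q0; nra. }
  assert (D0 : forall s t, d1 a (s, t) = 0).
  { intros s t.
    destruct (Rlt_or_le (r ^ 2) (s ^ 2)) as [Hs|Hs]; [apply Hb1; simpl; auto|].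
    destruct (Rlt_or_le (r ^ 2) (t ^ 2)) as [Ht|Ht]; [apply Hb1; simpl; auto|].
    assert (Hs' : - M < s < M) by (unfold M; split; nra).
    assert (Ht' : - M < t < M) by (unfold M; split; nra).
    set (Psi := fun tau => RInt (fun t => e s t) (-M) tau).
    assert (He : e s t = 0).
    { apply (ZERO Psi (fun tau => e s tau) (-M) M t); auto.
      - intros z. apply (is_derive_RInt (fun t => e s t) Psi (-M) z); auto.
        apply filter_forall. intros b. apply (RInt_correct (V:=R_CompleteNormedModule)). apply ex_RInt_cont. auto.
      - intros; unfold e; cbv beta; nra.
      - unfold Psi. apply (RInt_point (V:=R_CompleteNormedModule)).
      - apply E0. auto. }
    unfold e in He. nra. }
  intros [s t].
  destruct (MVT_gen (fun z => a (z, t)) s M (fun z => d1 a (z, t))) as (c & _ & Hc).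
  - intros z _. apply Derive_correct. apply (h1 (z, t)).
  - intros z _. apply der_cont. apply (h1 (z, t)).
  - rewrite D0 in Hc. rewrite (Hb (M, t)) in Hc. lra. simpl; auto.
Qed.


Lemma d1_opp k q : d1 (fun y => - k y) q = - d1 k q.
Proof. unfold d1. apply Derive_opp. Qed.
Lemma d2_opp k q : d2 (fun y => - k y) q = - d2 k q.
Proof. unfold d2. apply Derive_opp. Qed.

Lemma part2 u v Rad f g : unit_vec u -> unit_vec v -> detvu v u <> 0 ->
  field_C2c_disc Rad f -> field_C2c_disc Rad g ->
  (forall x, div f x = 0) -> (forall x, div g x = 0) ->
  (forall x, Lvl u v f x = Lvl u v g x) -> forall x, f x = g x.
Proof.
  intros Hu Hv Hdet Hf Hg Df Dg HL x.
  assert (EL : Lvl u v f = Lvl u v g) by (apply functional_extensionality; auto).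
  assert (Cu : forall q, curl f q = curl g q).
  { intros q. rewrite (part1 u v Rad f q), (part1 u v Rad g q); auto. now rewrite EL. }
  destruct (field_box Rad f Hf) as (rf & Hrf & Bf1 & Bf2).
  destruct (field_box Rad g Hg) as (rg & Hrg & Bg1 & Bg2).
  set (r := Rmax rf rg).
  assert (Hr : 0 < r) by (generalize (Rmax_l rf rg); unfold r; lra).
  destruct Hf as [[Cf1 _] [Cf2 _]]. destruct Hg as [[Cg1 _] [Cg2 _]].
  set (h1 := fun y => 1 * fst (f y) + (-1) * fst (g y)).
  set (h2 := fun y => 1 * snd (f y) + (-1) * snd (g y)).
  assert (C1h : C2 h1) by (apply C2_lin; auto).
  assert (C2h : C2 h2) by (apply C2_lin; auto).
  assert (B1 : box r h1).
  { apply box_lin; eapply box_mono; eauto; try lra; unfold r; [apply Rmax_l | apply Rmax_r]. }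
  assert (B2 : box r h2).
  { apply box_lin; eapply box_mono; eauto; try lra; unfold r; [apply Rmax_l | apply Rmax_r]. }
  destruct Cf1 as (af1 & af2 & _). destruct Cf2 as (bf1 & bf2 & _).
  destruct Cg1 as (ag1 & ag2 & _). destruct Cg2 as (bg1 & bg2 & _).
  assert (R1 : forall q, d1 h1 q = - d2 h2 q).
  { intros q. unfold h1, h2. rewrite (d1_lin _ _ _ _ af1 ag1), (d2_lin _ _ _ _ bf2 bg2).
    generalize (Df q) (Dg q). unfold div. intros. lra. }
  assert (R2 : forall q, d1 h2 q = d2 h1 q).
  { intros q. unfold h1, h2. rewrite (d1_lin _ _ _ _ bf1 bg1), (d2_lin _ _ _ _ af2 ag2).
    generalize (Cu q). unfold curl. intros. lra. }
  assert (E1 : d1 h1 = fun q => - d2 h2 q) by (apply functional_extensionality; auto).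
  assert (E2 : d1 h2 = d2 h1) by (apply functional_extensionality; auto).
  assert (L1 : forall q, d1 (d1 h1) q = - d2 (d2 h1) q).
  { intros q. rewrite E1, d1_opp, schwarz_C2, E2 by auto. reflexivity. }
  assert (L2 : forall q, d1 (d1 h2) q = - d2 (d2 h2) q).
  { intros q. rewrite E2, schwarz_C2, E1, d2_opp by auto. reflexivity. }
  assert (Z1 := harm_zero h1 r C1h Hr B1 L1 x).
  assert (Z2 := harm_zero h2 r C2h Hr B2 L2 x).
  unfold h1, h2 in *. rewrite (surjective_pairing (f x)), (surjective_pairing (g x)).
  f_equal; lra.
Qed.

Theorem theorem3 (u v : R * R) (Rad : R) :
  unit_vec u -> unit_vec v -> detvu v u <> 0 -> 0 < Rad ->
  (forall f : R * R -> R * R, field_C2c_disc Rad f ->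
     forall x : R * R,
       curl f x = / detvu v u * Ddir u (Ddir v (Lvl u v f)) x)
  /\
  (forall f g : R * R -> R * R,
     field_C2c_disc Rad f -> field_C2c_disc Rad g ->
     (forall x, div f x = 0) -> (forall x, div g x = 0) ->
     (forall x, Lvl u v f x = Lvl u v g x) ->
     forall x, f x = g x).
Proof.
  intros Hu Hv Hdet HR. split.
  - intros f Hf x. apply (part1 u v Rad f x); auto.
  - intros f g Hf Hg Df Dg HL x. apply (part2 u v Rad f g); auto.
Qed.
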